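(* For every graph $G$ with $n$ vertices and $\mu$ maximal cliques, $$\frac{\mu}{2n}-1\le b_H(G)\le \mu-1.$$
   Context: A grid is the set of integer points of the plane; a grid edge joins two grid points at distance $1$. A path in the grid is a sequence of distinct grid edges in which consecutive edges share exactly one grid point and non-consecutive edges share none; a bend is a pair of consecutive edges of the path with different directions (horizontal/vertical). An EPG representation of a graph $G$ is a family $(P_v)_{v\in V(G)}$ of grid paths such that distinct $u,v$ are adjacent iff $P_u,P_v$ share a grid edge; it is a $B_k$-EPG representation if every path has at most $k$ bends. It is Helly if every subfamily of pairwise edge-intersecting paths has a grid edge common to all its members. The Helly-bend number $b_H(G)$ is the smallest $k$ such that $G$ admits a Helly $B_k$-EPG representation. *)

(* Defs.v *)
From HB Require Import structures.
From mathcomp Require Import all_boot all_order all_algebra.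
Set Implicit Arguments. Unset Strict Implicit. Unset Printing Implicit Defensive.
Import Order.TTheory GRing.Theory Num.Theory.
Local Open Scope ring_scope.

Definition gpoint := (int * int)%type.

(** Grid edges, in canonical form: ((x,y), true) is the horizontal edge
    joining (x,y) and (x+1,y); ((x,y), false) is the vertical edge joining
    (x,y) and (x,y+1). Every grid edge (pair of grid points at distance 1)
    has exactly one such representation, so equality of [gedge]s is equality
    of grid edges. *)
Definition gedge := (gpoint * bool)%type.

Definition edge_ends (g : gedge) : seq gpoint :=
  let: ((x, y), h) := g in [:: (x, y); if h then (x + 1, y) else (x, y + 1)].

Definition nshared (g f : gedge) : nat := count (mem (edge_ends f)) (edge_ends g).

Definition grid_path (P : seq gedge) : Prop :=
  [/\ P != [::], uniq P &
      forall i j : nat, (i < j < size P)%N ->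
        if j == i.+1 then nshared (nth (0, 0, true) P i) (nth (0, 0, true) P j) = 1%N
        else nshared (nth (0, 0, true) P i) (nth (0, 0, true) P j) = 0%N].

Definition bends (P : seq gedge) : nat :=
  count (fun pr : gedge * gedge => pr.1.2 != pr.2.2) (zip P (behead P)).

Definition EPG_rep (T : finType) (adj : rel T) (Pf : T -> seq gedge) : Prop :=
  (forall v, grid_path (Pf v)) /\
  (forall u v, u != v -> (adj u v <-> has (mem (Pf v)) (Pf u))).

Definition Helly (T : finType) (Pf : T -> seq gedge) : Prop :=
  forall S : {set T},
    (forall u v, u \in S -> v \in S -> has (mem (Pf v)) (Pf u)) ->
    exists g : gedge, forall v, v \in S -> g \in Pf v.

Definition Helly_Bk_EPG (T : finType) (adj : rel T) (k : nat) : Prop :=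
  exists Pf : T -> seq gedge,
    [/\ EPG_rep adj Pf, Helly Pf & forall v, (bends (Pf v) <= k)%N].

Definition is_helly_bend_number (T : finType) (adj : rel T) (b : nat) : Prop :=
  Helly_Bk_EPG adj b /\ forall k, Helly_Bk_EPG adj k -> (b <= k)%N.

Definition is_clique (T : finType) (adj : rel T) (S : {set T}) : bool :=
  [forall u in S, forall v in S, (u != v) ==> adj u v].

Definition is_maximal_clique (T : finType) (adj : rel T) (S : {set T}) : bool :=
  is_clique adj S && [forall S' : {set T}, (S \subset S') && is_clique adj S' ==> (S' == S)].

Definition num_max_cliques (T : finType) (adj : rel T) : nat :=
  #|[set S : {set T} | is_maximal_clique adj S]|.

(* Main.v *)
Require Import Defs.
From HB Require Import structures.
From mathcomp Require Import all_boot all_order all_algebra.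
From mathcomp Require Import zify.
From Stdlib Require Import Classical.
Import Order.TTheory GRing.Theory Num.Theory.
Set Implicit Arguments. Unset Strict Implicit. Unset Printing Implicit Defensive.


Definition gstart (g : gedge) : gpoint := g.1.
Definition gend (g : gedge) : gpoint :=
  let: ((x, y), h) := g in if h then (x + 1, y)%R else (x, y + 1)%R.
Definition psum (p : gpoint) : int := (p.1 + p.2)%R.

Lemma edge_endsE g : edge_ends g = [:: gstart g; gend g].
Proof. by case: g => [[x y] h]. Qed.

Lemma psum_end g : psum (gend g) = (psum (gstart g) + 1)%R.
Proof. case: g => [[x y] [|]] /=; rewrite /psum /=; lia. Qed.

Lemma neq_psum p q : psum p != psum q -> p != q.
Proof. by apply: contra => /eqP ->. Qed.

Definition dE : gedge := (0, 0, true)%R.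

Lemma chain_grid_path P :
  P != [::] ->
  (forall t, t.+1 < size P -> gstart (nth dE P t.+1) = gend (nth dE P t)) ->
  grid_path P.
Proof.
move=> P0 ch.
have sE : forall t, t < size P ->
    psum (gstart (nth dE P t)) = (psum (gstart (nth dE P 0)) + t%:Z)%R.
  elim=> [|t IH] lt; first by rewrite GRing.addr0.
  rewrite ch // psum_end IH ?(ltnW lt) //; lia.
split=> //.
  apply/(uniqP dE) => i j; rewrite !inE => ilt jlt eq.
  have := sE _ ilt; have := sE _ jlt; rewrite eq => -> E.
  have : (i%:Z = j%:Z)%R by lia.
  by case.
move=> i j /andP [ij jlt].
have ilt : i < size P by apply: ltn_trans jlt.
rewrite /nshared !edge_endsE /=.
have ei := sE _ ilt; have ej := sE _ jlt.
have eei := psum_end (nth dE P i); have eej := psum_end (nth dE P j).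
rewrite -/dE.
case: ifP => [/eqP ji|jn].
  subst j; rewrite ch // !inE eqxx /=.
  rewrite (negbTE (neq_psum (p:=gstart (nth dE P i)) (q:=gend (nth dE P i)) _)); last by rewrite eei; lia.
  rewrite (negbTE (neq_psum (p:=gstart (nth dE P i)) (q:=gend (nth dE P i.+1)) _)) //; last by rewrite eej ej ei; lia.
rewrite !inE.
rewrite (negbTE (neq_psum (p:=gstart (nth dE P i)) (q:=gstart (nth dE P j)) _)); last by rewrite ei ej; lia.
rewrite (negbTE (neq_psum (p:=gstart (nth dE P i)) (q:=gend (nth dE P j)) _)); last by rewrite ei eej ej; lia.
rewrite (negbTE (neq_psum (p:=gend (nth dE P i)) (q:=gstart (nth dE P j)) _)); last by rewrite eei ei ej; move/negbT: jn; lia.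
rewrite (negbTE (neq_psum (p:=gend (nth dE P i)) (q:=gend (nth dE P j)) _)) //; by rewrite eei eej ei ej; lia.
Qed.
Arguments gend : simpl never.


Definition succ (g : gedge) : gedge :=
  let: ((x, y), h) := g in if h then ((x + 1, y)%R, h) else ((x, y + 1)%R, h).

Lemma nshared1 g f : g.2 = f.2 -> nshared g f = 1 -> f = succ g \/ g = succ f.
Proof.
case: g f => [[x y] h] [[x' y'] h'] /= <-.
case: h; rewrite /nshared /= !inE !xpair_eqE => Hc.
  have : ((x' = x + 1 /\ y' = y) \/ (x = x' + 1 /\ y = y'))%R by lia.
  by case=> [[-> ->]|[-> ->]]; [left|right].
have : ((x' = x /\ y' = y + 1) \/ (x = x' /\ y = y' + 1))%R by lia.
by case=> [[-> ->]|[-> ->]]; [left|right].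

Qed.

Lemma succ_inj : injective succ.
Proof.
case=> [[x y] h] [[x' y'] h'] /=; case: h; case: h' => //= -[] E1 E2;
congr (_, _, _); lia.
Qed.

Lemma iter_succ m g : iter m succ g =
  if g.2 then ((g.1.1 + (Posz m), g.1.2)%R, true) else ((g.1.1, g.1.2 + (Posz m))%R, false).
Proof.
case: g => [[x y] h] /=; elim: m => [|m IH] /=; first by case: h; rewrite addr0.
rewrite IH; move: IH; case: h => /= _; congr (_, _, _); lia.
Qed.

Lemma iter_succ_inj g : injective (fun m => iter m succ g).
Proof.
move=> m1 m2 /=; rewrite !iter_succ; case: g => [[x y] [|]] /= [] E; lia.
Qed.

Lemma exists_out (P : seq gedge) e : exists m, iter m succ e \notin P.
Proof.
set s := map (fun m => iter m succ e) (iota 0 (size P).+1).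
have us : uniq s by rewrite map_inj_uniq ?iota_uniq //; exact: iter_succ_inj.
case Ha: (all (mem P) s).
  have := uniq_leq_size us (fun x xs => (allP Ha) x xs).
  by rewrite size_map size_iota ltnn.
move/negbT: Ha => /allPn [x /mapP [m _ ->] nm]; by exists m.
Qed.

Definition dc (P : seq gedge) j :=
  (j.+1 < size P) && ((nth dE P j).2 != (nth dE P j.+1).2).
Definition bnd (P : seq gedge) i :=
  [|| i == 0, i.+1 == size P, (0 < i) && dc P i.-1 | dc P i].

Lemma local_bnd P i : grid_path P -> i < size P ->
  succ (nth dE P i) \notin P -> bnd P i.
Proof.
case=> P0 U H ilt; apply: contraR; rewrite /bnd !negb_or => /and4P [i0 is1 d1 d2].
case: i i0 is1 d1 d2 ilt => // k _ is1 d1 d2 klt.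
have k2 : k.+2 < size P by rewrite ltn_neqAle is1 klt.
have k1 : k.+1 < size P by apply: ltn_trans k2.
rewrite /= /dc k1 /= negbK in d1; rewrite /dc k2 /= negbK in d2.
have A := H k k.+1; rewrite leqnn k1 eqxx /= in A.
have B := H k.+1 k.+2; rewrite leqnn k2 eqxx /= in B.
have [A1|A2] := nshared1 (eqP d1) (A erefl).
  have [B1|B2] := nshared1 (eqP d2) (B erefl).
    by rewrite -B1 mem_nth.
  move: A1; rewrite B2 => /succ_inj E.
  have := (uniqP dE U) k k.+2; rewrite !inE => /(_ (ltn_trans _ k1) k2 (esym E)).
  by move=> /(_ (ltnSn k)) /eqP; rewrite -addn2 -{1}[k]addn0 eqn_add2l.
by rewrite -A2 mem_nth // ltnW.
Qed.

Lemma count_or_le (X : Type) (a b : pred X) s :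
  count (fun x => a x || b x) s <= count a s + count b s.
Proof.
elim: s => //= x s IH; rewrite addnACA leq_add //; by case: (a x); case: (b x).
Qed.

Lemma count_inj_le1 (f : nat -> nat) c s : injective f -> uniq s ->
  count (fun i => f i == c) s <= 1.
Proof.
move=> fi us; have -> : count (fun i => f i == c) s = count (pred1 c) (map f s).
  by rewrite count_map.
by rewrite count_uniq_mem ?leq_b1 // map_inj_uniq.
Qed.

Lemma dc_cons a P j : dc (a :: P) j.+1 = dc P j.
Proof. by []. Qed.

Lemma count_dc_le P n : count (dc P) (iota 0 n) <= bends P.
Proof.
elim: P n => [|a P IH] n.
  by rewrite (eq_count (a2 := pred0)) ?count_pred0 // => i; rewrite /dc.
case: n => [|n] //=.
rewrite (iotaDl 1 0) count_map.
rewrite (eq_count (a2 := dc P)); last by move=> i; rewrite /= add1n.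
apply: leq_trans (leq_add (leqnn _) (IH n)) _.
case: P {IH} => [|b P] //=.
Qed.

Lemma count_bnd P : count (bnd P) (iota 0 (size P)) <= 2 + 2 * bends P.
Proof.
set s := iota 0 (size P).
have c1 := count_inj_le1 0 (f := id) (s := s) (@inj_id nat) (iota_uniq 0 _).
have c2 := count_inj_le1 (size P) (f := succn) (s := s) succn_inj (iota_uniq 0 _).
have c4 : count (dc P) s <= bends P := count_dc_le P (size P).
have c3 : count (fun i => (0 < i) && dc P i.-1) s <= bends P.
  rewrite /s; case: (size P) => [|n] //=.
  rewrite (iotaDl 1 0) count_map.
  rewrite (eq_count (a2 := dc P)) ?count_dc_le // => i; by rewrite /= add1n.
rewrite /bnd.
apply: leq_trans (count_or_le _ _ _) _.
have := count_or_le (fun i => i.+1 == size P) (fun i => ((0 < i) && dc P i.-1) || dc P i) s.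
have := count_or_le (fun i => (0 < i) && dc P i.-1) (dc P) s.
move: c1 c2 c3 c4 => /=; lia.
Qed.

Section Cliques.
Variables (T : finType) (adj : rel T).

Lemma cliqueP (S : {set T}) :
  reflect (forall u v, u \in S -> v \in S -> u != v -> adj u v) (is_clique adj S).
Proof.
apply: (iffP forall_inP) => H.
  move=> u v uS vS; move/forall_inP: (H u uS) => /(_ v vS) /implyP; exact.
move=> u uS; apply/forall_inP => v vS; apply/implyP; exact: H.
Qed.

Lemma maxcliqueP (S : {set T}) : is_maximal_clique adj S ->
  is_clique adj S /\ forall S' : {set T}, S \subset S' -> is_clique adj S' -> S' = S.
Proof.
case/andP=> cS /forallP H; split=> // S' sub cS'.
by apply/eqP; move/implyP: (H S'); apply; rewrite sub cS'.
Qed.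

Lemma extend_clique (S : {set T}) : is_clique adj S ->
  exists2 Q, is_maximal_clique adj Q & S \subset Q.
Proof.
move=> cS.
case: (@arg_maxnP _ S (fun Q => is_clique adj Q && (S \subset Q)) (fun Q => #|Q|)).
  by rewrite cS subxx.
move=> Q /andP [cQ sQ] mx; exists Q => //.
apply/andP; split=> //; apply/forallP => S'; apply/implyP => /andP [QS' cS'].
have := mx S'; rewrite cS' (subset_trans sQ QS') => /(_ erefl) le.
by rewrite eq_sym eqEcard QS'; exact: le.
Qed.

Lemma maxclique_nonempty (Q : {set T}) : (0 < #|T|)%N -> is_maximal_clique adj Q -> Q != set0.
Proof.
move=> Tn /maxcliqueP [_ H]; apply/negP => /eqP Q0.
case/card_gt0P: Tn => t _.
have : [set t] = Q.
  apply: H; first by rewrite Q0 sub0set.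
  by apply/cliqueP => u v /set1P -> /set1P ->; rewrite eqxx.
by rewrite Q0 => /setP /(_ t); rewrite !inE eqxx.
Qed.

Lemma clique_witness (Pf : T -> seq gedge) (Q : {set T}) :
  EPG_rep adj Pf -> Helly Pf -> is_maximal_clique adj Q -> Q != set0 ->
  exists w, exists i, [/\ w \in Q, i < size (Pf w), bnd (Pf w) i &
                        Q = [set v | nth dE (Pf w) i \in Pf v]].
Proof.
move=> [gp ep] hel mQ Q0; have [cQ mxQ] := maxcliqueP mQ.
have [e He] : exists e, forall v, v \in Q -> e \in Pf v.
  apply: hel => u v uQ vQ; case: (eqVneq u v) => [<-|uv].
    by case: (gp u) => + _ _; case: (Pf u) => // a s _ /=; rewrite inE eqxx.
  by apply/(ep u v uv); move/cliqueP: cQ; apply.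
case/set0Pn: Q0 => v0 v0Q.
have [m1 hm1] := exists_out (Pf v0) e.
have exP : exists m, [exists v in Q, iter m succ e \notin Pf v].
  by exists m1; apply/exists_inP; exists v0.
case: (ex_minnP exP) => m0 /exists_inP [w wQ wout] minm.
case: m0 wout minm => [|m] wout minm; first by rewrite /= He in wout.
have allin : forall v, v \in Q -> iter m succ e \in Pf v.
  move=> v vQ; apply/negPn/negP => nin.
  suff: m < m by rewrite ltnn.
  by apply: minm; apply/exists_inP; exists v.
set es := iter m succ e.
have esw : es \in Pf w by exact: allin.
exists w, (index es (Pf w)); rewrite nth_index // index_mem; split=> //.
  by apply: local_bnd; rewrite ?index_mem ?nth_index.
symmetry; apply: mxQ.
  by apply/subsetP => v vQ; rewrite inE allin.
apply/cliqueP => u v; rewrite !inE => uin vin uv.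
by apply/(ep u v uv); apply/hasP; exists es.
Qed.

Lemma lower_bound k : (0 < #|T|)%N -> Helly_Bk_EPG adj k ->
  num_max_cliques adj <= #|T| * (2 + 2 * k).
Proof.
move=> Tn [Pf [ep hel bk]].
set A := [set S : {set T} | is_maximal_clique adj S].
set h := fun p : T * nat => [set v | nth dE (Pf p.1) p.2 \in Pf v].
set L := flatten [seq [seq (w, i) | i <- iota 0 (size (Pf w)) & bnd (Pf w) i] | w <- enum T].
have sub : {subset enum A <= map h L}.
  move=> Q; rewrite mem_enum inE => mQ.
  have [w [i [wQ ilt bi ->]]] := clique_witness ep hel mQ (maxclique_nonempty Tn mQ).
  apply/mapP; exists (w, i) => //.
  apply/flattenP; exists [seq (w, i) | i <- iota 0 (size (Pf w)) & bnd (Pf w) i].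
    by apply/mapP; exists w; rewrite ?mem_enum.
  by apply/mapP; exists i => //; rewrite mem_filter bi mem_iota.
have := uniq_leq_size (enum_uniq _) sub.
rewrite -cardE size_map /num_max_cliques -/A => le; apply: leq_trans le _.
rewrite /L size_flatten sumnE !big_map -enumT big_enum /=.
rewrite -sum_nat_const; apply: leq_sum => w _.
rewrite size_map size_filter; apply: leq_trans (count_bnd _) _.
by rewrite leq_add2l leq_mul2l bk orbT.
Qed.

End Cliques.


Definition stepp (p : gpoint) (h : bool) (t : nat) : gpoint :=
  if h then ((p.1 + (Posz t))%R, p.2) else (p.1, (p.2 + (Posz t))%R).

Fixpoint segp (p : gpoint) (h : bool) (L : nat) : seq gedge :=
  if L is L'.+1 then (p, h) :: segp (gend (p, h)) h L' else [::].

Lemma gend_stepp p h : gend (p, h) = stepp p h 1.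
Proof. by case: p => x y; case: h. Qed.

Lemma stepp_stepp p h t s : stepp (stepp p h s) h t = stepp p h (s + t).
Proof. case: p => x y; case: h; rewrite /stepp /=; congr (_, _); lia. Qed.

Lemma stepp0 p h : stepp p h 0 = p.
Proof. by case: p => x y; case: h; rewrite /stepp /= addr0. Qed.

Lemma mem_segp g p h L :
  g \in segp p h L <-> exists2 t, t < L & g = (stepp p h t, h).
Proof.
elim: L p => [|L IH] p /=.
  by split=> // -[].
rewrite inE; split.
  case/orP => [/eqP ->|]; first by exists 0 => //; rewrite stepp0.
  case/IH => t tL ->; exists t.+1 => //; by rewrite gend_stepp stepp_stepp add1n.
case=> [[|t]] tL E; first by apply/orP; left; rewrite E stepp0.
apply/orP; right; apply/IH; exists t => //; by rewrite E gend_stepp stepp_stepp add1n.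
Qed.

Definition R : rel gedge := fun g f => gstart f == gend g.

Lemma path_segp x p h L : gend x = p ->
  path R x (segp p h L) /\ gend (last x (segp p h L)) = stepp p h L.
Proof.
elim: L x p => [|L IH] x p /= ex.
  by split=> //; rewrite ex stepp0.
have [IH1 IH2] := IH (p, h) (gend (p, h)) erefl.
split; first by rewrite /R /= ex eqxx.
by rewrite IH2 gend_stepp stepp_stepp add1n.
Qed.

Lemma bends_cons2 a b s : bends [:: a, b & s] = (a.2 != b.2) + bends (b :: s).
Proof. by []. Qed.

Lemma bends_segp p h L : bends (segp p h L) = 0.
Proof.
elim: L p => [|L IH] p //=.
case: L IH => [|L] IH //.
by rewrite [segp _ h _]/= bends_cons2 eqxx -[_ :: segp _ _ _]/(segp (gend (p, h)) h L.+1) IH.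
Qed.

Lemma bends_cat s1 s2 : bends (s1 ++ s2) <= bends s1 + 1 + bends s2.
Proof.
elim: s1 => [|a s1 IH] /=; first by rewrite addnC leq_addr.
case: s1 IH => [|b s1] IH /=.
  by move=> {IH}; case: s2 => [|b s2] //; rewrite bends_cons2 add0n leq_add2r leq_b1.
rewrite bends_cons2 [bends [:: a, b & s1]]bends_cons2 -!addnA leq_add2l addnA.
exact: IH.
Qed.

Lemma bends_flatten (ss : seq (seq gedge)) :
  all (fun s => bends s == 0) ss -> bends (flatten ss) <= (size ss).-1.
Proof.
elim: ss => [|s ss IH] //= /andP [/eqP b0 al].
case: ss IH al => [|s' ss] IH al; first by rewrite /= cats0 b0.
apply: leq_trans (bends_cat _ _) _; rewrite b0 add0n add1n ltnS.
exact: IH.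
Qed.

Lemma path_chain (cr : nat -> gpoint) (hd : nat -> bool) (ln : nat -> nat) k a x :
  0 < a -> gend x = cr a.-1 ->
  (forall j, a <= j < a + k -> stepp (cr j.-1) (hd j) (ln j) = cr j) ->
  path R x (flatten [seq segp (cr j.-1) (hd j) (ln j) | j <- iota a k]).
Proof.
elim: k a x => [|k IH] a x a0 ex st //=.
rewrite cat_path; have [p1 p2] := path_segp (hd a) (ln a) ex.
rewrite p1 /=; apply: IH => //.
  by rewrite p2 st // leqnn addnS ltnS leq_addr.
move=> j /andP [aj ja]; apply: st; rewrite (ltnW aj) /=; by rewrite addnS.
Qed.


Section Construction.
Variables (T : finType) (adj : rel T).
Hypothesis adj_sym : symmetric adj.
Hypothesis Tn : 0 < #|T|.

Definition Aset := [set S : {set T} | is_maximal_clique adj S].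
Definition Qs := enum Aset.
Definition m := size Qs.
Definition Qj j := nth set0 Qs j.
Definition nn := #|T|.
Definition K := nn.+2.
Definition off (v : T) j := if v \in Qj j.-1 then 0 else (enum_rank v).+1.
Definition c (v : T) j : nat :=
  if j == 0 then 0 else if j == m.+1 then K * m.+1 else K * j + off v j.
Definition corner v j : gpoint :=
  if odd j then ((Posz (c v j.+1)), (Posz (c v j))) else ((Posz (c v j)), (Posz (c v j.+1))).
Definition len v j := c v j.+1 - c v j.-1.
Definition Pf v := flatten [seq segp (corner v j.-1) (odd j) (len v j) | j <- iota 1 m].

Lemma off_le v j : off v j <= nn.
Proof. rewrite /off; case: ifP => // _; exact: ltn_ord. Qed.

Lemma c_bounds v j : j <= m.+1 -> K * j <= c v j <= K * j + nn.
Proof.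
rewrite /c => jm; case: eqP => [->|_]; first by rewrite muln0.
case: eqP => [->|_]; first by rewrite leqnn leq_addr.
by rewrite leq_addr leq_add2l off_le.
Qed.

Lemma c_mono v j : 0 < j -> j <= m -> c v j.-1 < c v j.+1.
Proof.
move=> j0 jm.
have /andP [_ h1] := c_bounds v (leq_trans (leq_pred j) (leqW jm)).
have /andP [h2 _] := c_bounds v (jm : j.+1 <= m.+1).
apply: leq_ltn_trans h1 _; apply: leq_trans h2.
rewrite /K; case: j j0 {jm} => // j _ /=.
rewrite !mulSn !mulnS; lia.
Qed.

Lemma c_inj_j a j j' : K * j <= a <= K * j + nn -> K * j' <= a <= K * j' + nn -> j = j'.
Proof.
move=> /andP [h1 h2] /andP [h3 h4].
have KK : nn < K by rewrite /K.
case: (ltngtP j j') => // lt.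
  have : K * j.+1 <= K * j' by apply: leq_mul (leqnn K) lt.
  rewrite mulnS; lia.
have : K * j'.+1 <= K * j by apply: leq_mul (leqnn K) lt.
rewrite mulnS; lia.
Qed.

Lemma corner_step v j : 0 < j -> j <= m ->
  stepp (corner v j.-1) (odd j) (len v j) = corner v j.
Proof.
move=> j0 jm; have lt := c_mono v j0 jm.
rewrite /corner /len; case: j j0 jm lt => // j _ jm lt /=.
case: (odd j) => /=; rewrite /stepp /=; congr (_, _) => //; by rewrite -PoszD subnKC // ltnW.
Qed.

Lemma stepp_form v j t : 0 < j ->
  stepp (corner v j.-1) (odd j) t =
  if odd j then (((Posz (c v j.-1)) + (Posz t))%R, (Posz (c v j)))
  else ((Posz (c v j)), ((Posz (c v j.-1)) + (Posz t))%R).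
Proof.
move=> j0; rewrite /corner; case: j j0 => // j _ /=.
by case: (odd j).
Qed.

Lemma mem_Pf g v : g \in Pf v <->
  exists j, [/\ 0 < j, j <= m & exists2 t, t < len v j &
     g = (if odd j then (((Posz (c v j.-1)) + (Posz t))%R, (Posz (c v j)))
          else ((Posz (c v j)), ((Posz (c v j.-1)) + (Posz t))%R), odd j)].
Proof.
split.
  case/flattenP => s /mapP [j]; rewrite mem_iota add1n ltnS => /andP [j0 jm] -> /mem_segp [t tl ->].
  by exists j; split=> //; exists t => //; rewrite stepp_form.
case=> j [j0 jm [t tl E]]; apply/flattenP.
exists (segp (corner v j.-1) (odd j) (len v j)).
  by apply/mapP; exists j => //; rewrite mem_iota add1n ltnS j0 jm.
by apply/mem_segp; exists t => //; rewrite stepp_form.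
Qed.

Lemma Pf_path v : 0 < m -> grid_path (Pf v).
Proof.
move=> m0.
pose x0 : gedge := ((((corner v 0).1 - 1)%R, (corner v 0).2), true).
have ex0 : gend x0 = corner v 0.
  by rewrite /x0; case: (corner v 0) => a b; rewrite /gend /= subrK.
have pth : path R x0 (Pf v).
  apply: (@path_chain (corner v) odd (len v) m 1 x0 erefl ex0) => j /andP [j0 jm]; apply: corner_step => //.
apply: chain_grid_path.
  have lt := c_mono v (ltn0Sn 0) (m0 : 1 <= m).
  have : (stepp (corner v 0) true 0, true) \in Pf v.
    apply/mem_Pf; exists 1; split=> //; exists 0; first by rewrite /len subn_gt0.
    by rewrite (stepp_form v 0 (ltn0Sn 0)).
  by case: (Pf v).
move=> t lt; have := (sortedP dE (path_sorted pth)) t lt.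
by move=> /eqP.
Qed.


Lemma Pf_bends v : bends (Pf v) <= m.-1.
Proof.
rewrite /Pf; apply: leq_trans (bends_flatten _) _.
  by apply/allP => s /mapP [j _ ->]; rewrite bends_segp.
by rewrite size_map size_iota.
Qed.

Lemma Pf_common Q : Q \in Aset -> exists g, forall w, w \in Q -> g \in Pf w.
Proof.
move=> QA; have QQs : Q \in Qs by rewrite mem_enum.
set j := (index Q Qs).+1.
have jm : j <= m by rewrite /j index_mem.
have QjE : Qj j.-1 = Q by rewrite /Qj /j /= nth_index.
have cw : forall w, w \in Q -> c w j = K * j.
  move=> w wQ; rewrite /c /j /= -/j; case: eqP => [jE|_].
    by move: jm; rewrite jE ltnn.
  by rewrite /off QjE wQ addn0.
exists (if odd j then ((Posz (K * j.-1 + nn)), Posz (K * j), true)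
        else (Posz (K * j), Posz (K * j.-1 + nn), false)) => w wQ.
have b1 := c_bounds w (leq_trans (leq_pred j) (leqW jm)).
have b2 := c_bounds w (jm : j.+1 <= m.+1).
apply/mem_Pf; exists j; split=> //.
exists (K * j.-1 + nn - c w j.-1).
  rewrite /len; move: b1 b2; rewrite /j /= mulnS /K; lia.
rewrite cw //; move/andP: b1 => [_ h1].
by case: (odd j); congr (_, _, _); rewrite -PoszD subnKC.
Qed.

Lemma Pf_adj u v : u != v -> has (mem (Pf v)) (Pf u) -> adj u v.
Proof.
move=> uv /hasP [g gu gv].
have [j [j0 jm [t tl Eu]]] := (mem_Pf g u).1 gu.
have [j' [j0' jm' [t' tl' Ev]]] := (mem_Pf g v).1 gv.
have ce : c u j = c v j'.
  move: Ev; rewrite Eu; case: (odd j); case: (odd j') => //= -[] E1 E2; lia.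
have jj : j = j'.
  apply: (@c_inj_j (c u j)); first exact: c_bounds (leqW jm).
  by rewrite ce; exact: c_bounds (leqW jm').
subst j'.
move: ce; rewrite /c; case: eqP => [j00|_]; first by rewrite j00 in j0.
case: eqP => [jE|_]; first by move: jm; rewrite jE ltnn.
move/eqP; rewrite eqn_add2l /off.
have QA : Qj j.-1 \in Aset.
  by rewrite -mem_enum /Qj mem_nth // -/m; move: jm; rewrite /m; case: (j) j0 => // k.
case: ifP => uQ; case: ifP => vQ //.
  move: QA; rewrite inE => /maxcliqueP [/cliqueP cQ _]; by move=> _; apply: cQ.
by move/eqP => /succn_inj /val_inj /enum_rank_inj E; rewrite E eqxx in uv.
Qed.

Lemma Aset_nonempty : 0 < m.
Proof.
have [Q mQ _] := @extend_clique T adj set0 (introT (cliqueP _ _) (fun u v (h : u \in set0) => ltac:(by rewrite inE in h))).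
by rewrite /m -cardE; apply/card_gt0P; exists Q; rewrite inE.
Qed.

Lemma construction : Helly_Bk_EPG adj m.-1.
Proof.
have m0 := Aset_nonempty.
exists Pf; split; last exact: Pf_bends.
  split; first by move=> v; exact: Pf_path.
  move=> u v uv; split; last exact: Pf_adj.
  move=> a.
  have cl : is_clique adj [set u; v].
    apply/cliqueP => x y; rewrite !inE => /orP [] /eqP -> /orP [] /eqP -> //;
    rewrite ?eqxx // => _; by rewrite // adj_sym.
  have [Q mQ sub] := extend_clique cl.
  have QA : Q \in Aset by rewrite inE.
  have [g Hg] := Pf_common QA.
  apply/hasP; exists g; apply: Hg; apply: (subsetP sub); by rewrite !inE eqxx ?orbT.
move=> S HS.
have cl : is_clique adj S by apply/cliqueP => x y xS yS xy; apply: Pf_adj xy (HS _ _ xS yS).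
have [Q mQ sub] := extend_clique cl.
have QA : Q \in Aset by rewrite inE.
  have [g Hg] := Pf_common QA.
by exists g => w wS; apply: Hg; apply: (subsetP sub).
Qed.

End Construction.


Lemma min_exists (P : nat -> Prop) k : P k -> exists b, P b /\ forall k', P k' -> b <= k'.
Proof.
elim: k {-2}k (leqnn k) => [|n IH] k kn Pk.
  exists k; split=> // k' _; move: kn; rewrite leqn0 => /eqP ->; exact: leq0n.
case: (classic (exists2 k', k' < k & P k')) => [[k' lt Pk']|nex].
  by apply: (IH k') => //; rewrite -ltnS; apply: leq_trans lt kn.
exists k; split=> // k' Pk'; rewrite leqNgt; apply/negP => lt; apply: nex; by exists k'.
Qed.

Local Open Scope ring_scope.

Theorem theorem3p1 (T : finType) (adj : rel T)
  (adj_sym : symmetric adj) (adj_irr : irreflexive adj) (T_nonempty : (0 < #|T|)%N) :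
  exists b : nat,
    [/\ is_helly_bend_number adj b,
        (num_max_cliques adj)%:Q / (2 * #|T|)%:Q - 1 <= b%:Q
      & b%:Q <= (num_max_cliques adj)%:Q - 1].
Proof.
have mE : m adj = num_max_cliques adj by rewrite /m /Qs -cardE.
have m0 : (0 < m adj)%N := Aset_nonempty adj.
have [b [Hb minb]] := min_exists (construction adj_sym T_nonempty).
have ub : (b <= (m adj).-1)%N := minb _ (construction adj_sym T_nonempty).
have lb := lower_bound T_nonempty Hb.
exists b; split=> //.
  rewrite lerBlDr ler_pdivrMr; last by rewrite ltr0n muln_gt0.
  rewrite -[1]/(1%:R) -natrD -natrM ler_nat.
  move: lb; rewrite -mE; nia.
rewrite lerBrDr -[1]/(1%:R) -natrD ler_nat -mE.
move: ub m0; lia.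
Qed.
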